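(* Let $G$ be a tree on $n\geq 2$ vertices with Randi\'c index $R$ and radius $r$. If $G$ is a path with an even number of vertices, greater than $2$, then \[R-r=\sqrt 2-\frac{3}{2};\] otherwise \[R-r\geq 0,\] with equality for the path on $2$ vertices.
   Context: The Randi\'c index is $R(G)=\sum_{uv\in E(G)}\frac{1}{\sqrt{d_ud_v}}$, where $d_v$ is the degree of $v$. The radius is the minimum over vertices $v$ of the maximum distance from $v$ to another vertex. *)

(* Defs.v *)
From HB Require Import structures.
From mathcomp Require Import all_boot all_order all_algebra.
From mathcomp Require Import reals.
Set Implicit Arguments. Unset Strict Implicit. Unset Printing Implicit Defensive.
Import Order.TTheory GRing.Theory Num.Theory.

Section Graphs.
Variable n : nat.
Implicit Types (adj : rel 'I_n).

Definition simple_graph adj := symmetric adj /\ irreflexive adj.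

Definition connected adj := forall x y : 'I_n, connect adj x y.

Definition has_cycle adj :=
  exists (x : 'I_n) (p : seq 'I_n),
    [/\ 2 <= size p, uniq (x :: p), path adj x p & adj (last x p) x].

Definition is_tree adj := connected adj /\ ~ has_cycle adj.

Definition deg adj (v : 'I_n) : nat := #|[set u | adj v u]|.

Fixpoint ball adj (k : nat) (x : 'I_n) : {set 'I_n} :=
  if k is k'.+1 then
    ball adj k' x :|: [set y | [exists z in ball adj k' x, adj z y]]
  else [set x].

(* graph distance: least k with y within k steps of x (meaningful for connected graphs) *)
Definition dist adj (x y : 'I_n) : nat :=
  find (fun k => y \in ball adj k x) (iota 0 n).

Definition ecc adj (x : 'I_n) : nat := \max_(y < n) dist adj x y.

(* radius = min over vertices of eccentricity (default n exceeds every eccentricity) *)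
Definition radius adj : nat := \big[minn/n]_(x < n) ecc adj x.

Definition randic (R : rcfType) adj : R :=
  \sum_(u < n) \sum_(v < n | (u < v)%N && adj u v)
     (Num.sqrt ((deg adj u * deg adj v)%:R))^-1.

(* G is (isomorphic to) the path P_n *)
Definition is_path_graph adj :=
  exists f : 'I_n -> 'I_n, injective f /\
    forall u v, adj u v = ((f u == (f v).+1 :> nat) || (f v == (f u).+1 :> nat)).

End Graphs.

(* Main.v *)
Require Import Defs.
From HB Require Import structures.
From mathcomp Require Import all_boot all_order all_algebra.
From mathcomp Require Import reals.
From mathcomp Require Import zify ring lra.
Set Implicit Arguments. Unset Strict Implicit. Unset Printing Implicit Defensive.
Import Order.TTheory GRing.Theory Num.Theory.

Local Open Scope ring_scope.

Section Seq.
Variable R : rcfType.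

Lemma sum_nat_pick (m k : nat) (c : R) :
  \sum_(i < m) (if (i : nat) == k then c else 0) = if (k < m)%N then c else 0.
Proof.
elim: m => [|m IH]; first by rewrite big_ord0.
rewrite big_ord_recr /= IH.
case: (ltngtP k m) => [lt|gt|->].
- by rewrite addr0 ltnS ltnW.
- by rewrite addr0 ltnS leqNgt gt.
- by rewrite ltnSn add0r.
Qed.

Lemma sqrt2_facts : 1 <= Num.sqrt (2 : R) /\ Num.sqrt (2:R) * Num.sqrt 2 = 2 /\ Num.sqrt (2:R) <= 3/2.
Proof.
have e : Num.sqrt (2:R) * Num.sqrt 2 = 2 by rewrite -expr2 sqr_sqrtr.
have p := sqrtr_ge0 (2:R).
split; last split => //; nra.
Qed.

Variable D : nat.
Variable a : nat -> nat.
Hypothesis D2 : (2 <= D)%N.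
Hypothesis a0 : a 0 = 1%N.
Hypothesis aD : a D = 1%N.
Hypothesis aint : forall i, (0 < i < D)%N -> (2 <= a i)%N.

Let r2 := Num.sqrt (2 : R).
Let s i := Num.sqrt ((a i)%:R : R).
Let x i := (s i)^-1.
Let c := r2 / 2 - 1 / 2.

Definition e_ i : R := if (0 < i)%N then (Num.sqrt ((a i * a i.-1)%:R))^-1 else 0.
Definition g_ i : R := if (0 < i < D)%N then ((a i - 2)%N)%:R * (Num.sqrt ((a i)%:R))^-1 else 0.
Definition X_ i : R := if (0 < i < D)%N then Num.sqrt ((a i)%:R) - Num.sqrt 2 else 0.
Let l i : R := if (0 < i < D)%N then (1 - r2 * x i) / 2 else 0.
Let lp i : R := if (0 < i)%N then l i.-1 else 0.
Let B i : R := (if (0 < i)%N then 1 / 2 else 0) + (if i == 1%N then c else 0) + (if i == D then c else 0).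

Lemma int_facts i : (0 < i < D)%N ->
  [/\ r2 <= s i, 0 < x i, s i * x i = 1, r2 * x i <= 1 & s i * s i = (a i)%:R].
Proof.
move=> ii; have ai := aint ii.
have rs : r2 <= s i by rewrite /r2 /s ler_sqrt ?ler0n // ler_nat.
have [r1 [rr _]] := sqrt2_facts; rewrite -/r2 in r1 rr.
have s0 : 0 < s i by rewrite -/r2 in r1; lra.
have x0 : 0 < x i by rewrite /x invr_gt0.
have sx : s i * x i = 1 by rewrite /x mulfV // gt_eqF.
split => //.
  by have := ler_wpM2r (ltW x0) rs; rewrite sx.
by rewrite -expr2 /s sqr_sqrtr ?ler0n.
Qed.

Lemma g_eq i : g_ i = 2 * r2 * l i + X_ i.
Proof.
rewrite /g_ /l /X_; case: ifP => ii; last by rewrite mulr0 addr0.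
have [rs x0 sx rx ss] := int_facts ii.
have [r1 [rr _]] := sqrt2_facts; rewrite -/r2 in r1 rr.
have ai := aint ii.
rewrite -/(s i) -/(x i) -/r2 natrB // -ss.
have -> : (s i * s i - 2%:R) * x i = s i - 2 * x i.
  by rewrite mulrBl -mulrA sx mulr1.
rewrite -[2%:R]/(2 : R). 
have -> : 2 * r2 * ((1 - r2 * x i) / 2) = r2 - (r2 * r2) * x i by field.
by rewrite rr; ring.
Qed.

Lemma e_ge i : (i <= D)%N -> B i - r2 * (lp i + l i) <= e_ i.
Proof.
move=> iD; have [r1 [rr _]] := sqrt2_facts; rewrite -/r2 in r1 rr.
rewrite /B /lp /l /e_.
case: i iD => [|i] iD.
  have D0 : (0%N == D) = false by apply/eqP; lia.
  by rewrite /= D0 !addr0 mulr0 subr0.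
rewrite /= -/r2.
case: (eqVneq i 0%N) => [->|i0].
  have ii : (0 < 1 < D)%N by rewrite /= D2.
  have [rs x0 sx rx ss] := int_facts ii.
  have D1 : (1%N == D) = false by apply/eqP; lia.
  rewrite eqxx D1 D2 /= a0 muln1 -/(s 1%N) -/(x 1%N) /c.
  have -> : (1 / 2 + (r2 / 2 - 1 / 2) + 0 - r2 * (0 + (1 - r2 * x 1%N) / 2)) = (r2 * r2) * x 1%N / 2.
    by field.
  rewrite rr; lra.
case: (eqVneq i.+1 D) => [iD'|iD'].
  have ii : (0 < i < D)%N by rewrite lt0n i0 -iD' /=.
  have [rs x0 sx rx ss] := int_facts ii.
  have D1 : (D == 1%N) = false by apply/eqP; lia.
  rewrite iD' ltnn leqnn andbT lt0n i0 D1 aD mul1n /= -/(s i) -/(x i) /c.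
  have -> : (1 / 2 + 0 + (r2 / 2 - 1 / 2) - r2 * ((1 - r2 * x i) / 2 + 0)) = (r2 * r2) * x i / 2.
    by field.
  rewrite rr; lra.
have ii : (0 < i < D)%N by rewrite lt0n i0 iD.
have ii' : (0 < i.+1 < D)%N by rewrite /= ltn_neqAle iD' iD.
have [rs x0 sx rx ss] := int_facts ii.
have [rs' x0' sx' rx' ss'] := int_facts ii'.
have iD2 : (i.+1 < D)%N by rewrite ltn_neqAle iD' iD.
rewrite ii iD2 (_ : (i.+1 == 1%N) = false); last by rewrite eqSS; apply/negbTE.
rewrite natrM sqrtrM ?ler0n // invfM -/(s i) -/(s i.+1) -/(x i) -/(x i.+1).
set p := x i.+1 in x0' rx' sx' *; set q := x i in x0 rx sx *.
have h1 : 0 <= (1 - r2 * p) * (1 - r2 * q) by apply: mulr_ge0; lra.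
have h2 : 0 <= (r2 - 1) * (2 - r2 * p - r2 * q) by apply: mulr_ge0; lra.
have e1 : (1 - r2 * p) * (1 - r2 * q) = 1 - r2 * p - r2 * q + (r2 * r2) * (p * q) by ring.
have e2 : (r2 - 1) * (2 - r2 * p - r2 * q) = 2 * r2 - (r2 * r2) * p - (r2 * r2) * q - 2 + r2 * p + r2 * q by ring.
rewrite e1 rr in h1; rewrite e2 rr in h2.
have -> : 1 / 2 + 0 + 0 - r2 * ((1 - r2 * q) / 2 + (1 - r2 * p) / 2) = 1/2 - r2 + (r2 * r2) * q / 2 + (r2 * r2) * p / 2 by field.
rewrite rr.
nra.
Qed.

Lemma sumB : \sum_(i < D.+1) B i = D%:R / 2 + 2 * c.
Proof.
rewrite /B !big_split /= !sum_nat_pick (ltnSn D) (_ : (1 < D.+1)%N) ?ltnS ?(ltnW D2) //.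
rewrite big_ord_recl /= big_mkcond /=.
rewrite (eq_bigr (fun _ => 1 / 2)) // sumr_const card_ord add0r.
by rewrite -mulr_natr; field.
Qed.

Lemma sumLp : \sum_(i < D.+1) lp i = \sum_(i < D.+1) l i.
Proof.
rewrite big_ord_recl /lp /= add0r [in RHS]big_ord_recr /=.
have -> : l D = 0 by rewrite /l ltnn andbF.
rewrite addr0.
by apply: eq_bigr => i _.
Qed.

Lemma seq_main : (D%:R - 2) / 2 + r2 + \sum_(i < D.+1) X_ i <=
  \sum_(i < D.+1) e_ i + \sum_(i < D.+1) g_ i.
Proof.
have H : \sum_(i < D.+1) (B i - r2 * (lp i + l i) + (2 * r2 * l i + X_ i)) <=
  \sum_(i < D.+1) (e_ i + g_ i).
  apply: ler_sum => i _; rewrite g_eq lerD2r; apply: e_ge.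
  by rewrite -ltnS.
rewrite -big_split /=.
have E : \sum_(i < D.+1) (B i - r2 * (lp i + l i) + (2 * r2 * l i + X_ i)) =
   (D%:R - 2) / 2 + r2 + \sum_(i < D.+1) X_ i.
  have s1 : \sum_(i < D.+1) r2 * (lp i + l i) = r2 * (\sum_(i < D.+1) l i + \sum_(i < D.+1) l i).
    by rewrite -mulr_sumr big_split sumLp.
  have s2 : \sum_(i < D.+1) (2 * r2 * l i + X_ i) = 2 * r2 * \sum_(i < D.+1) l i + \sum_(i < D.+1) X_ i.
    by rewrite big_split -mulr_sumr.
  rewrite big_split sumrB s1 s2 sumB /c.
  by rewrite /=; field.
by rewrite -E.
Qed.

Lemma seq_path : (forall i, (0 < i < D)%N -> a i = 2%N) ->
  \sum_(i < D.+1) e_ i = (D%:R - 2) / 2 + r2.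
Proof.
move=> a2; have [r1 [rr _]] := sqrt2_facts; rewrite -/r2 in r1 rr.
have r0 : r2 != 0 by apply/eqP => e; move: r1; rewrite e; lra.
have inv2 : (Num.sqrt (2%:R : R))^-1 = r2 / 2.
  by apply: (mulfI r0); rewrite -/r2 mulfV // mulrA rr; field.
have sq4 : Num.sqrt ((2 * 2)%:R : R) = 2 by rewrite natrM sqrtrM ?ler0n // -/r2 rr.
have -> : (D%:R - 2) / 2 + r2 = \sum_(i < D.+1) B i by rewrite sumB /c; field.
apply: eq_bigr => i _; rewrite /e_ /B.
have iD : (i <= D)%N by rewrite -ltnS.
case: (posnP i) => [->|i0]; first by rewrite /= (_ : (0%N == D) = false) ?addr0 //; apply/eqP; lia.
case: (eqVneq (i : nat) 1%N) => [e1|n1].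
  have ii : (0 < 1 < D)%N by rewrite /= D2.
  rewrite e1 /= a0 muln1 a2 // (_ : (1%N == D) = false); last by apply/eqP; lia.
  by rewrite inv2 /c addr0; field.
case: (eqVneq (i : nat) D) => [eD|nD].
  have ii : (0 < D.-1 < D)%N by apply/andP; split; lia.
  by rewrite eD /= aD mul1n a2 // inv2 /c addr0; field.
have ii : (0 < i < D)%N by apply/andP; split; lia.
have ii' : (0 < i.-1 < D)%N by apply/andP; split; lia.
by rewrite a2 // a2 // sq4 !addr0 div1r.
Qed.

End Seq.

Local Close Scope ring_scope.

Section Rooted.
Variable n : nat.
Variable adj : rel 'I_n.
Hypothesis adj_sym : symmetric adj.
Hypothesis adj_irr : irreflexive adj.
Hypothesis conn : connected adj.
Hypothesis acyc : ~ has_cycle adj.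
Variable rt : 'I_n.

Lemma half_facts m : m./2 + m./2 <= m /\ m <= m./2 + m./2 + 1.
Proof.
have := odd_double_half m; rewrite -addnn; case: (odd m) => /= e; lia.
Qed.

Lemma ballS k x y : (y \in ball adj k.+1 x) =
  (y \in ball adj k x) || [exists z in ball adj k x, adj z y].
Proof. by rewrite /= !inE. Qed.

Lemma ball_step k x z y : z \in ball adj k x -> adj z y -> y \in ball adj k.+1 x.
Proof. move=> zb azy; rewrite ballS; apply/orP; right; apply/existsP; exists z; by rewrite zb. Qed.

Lemma ball_sub1 k x y : y \in ball adj k x -> y \in ball adj k.+1 x.
Proof. by move=> yb; rewrite ballS yb. Qed.

Lemma ball_mono k m x y : k <= m -> y \in ball adj k x -> y \in ball adj m x.
Proof.
move=> km yb; elim: m km => [|m IH] km.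
  by move: km; rewrite leqn0 => /eqP kz; rewrite -kz.
move: km; rewrite leq_eqVlt => /orP [/eqP km|km]; first by rewrite -km.
by apply: ball_sub1; apply: IH.
Qed.

Lemma ball0 x y : (y \in ball adj 0 x) = (y == x).
Proof. by rewrite /= inE. Qed.

Lemma ball_lip (phi : 'I_n -> nat) :
  (forall z y, adj z y -> phi y <= phi z + 1) ->
  forall k x y, y \in ball adj k x -> phi y <= phi x + k.
Proof.
move=> Hphi; elim=> [|k IH] x y.
  by rewrite ball0 => /eqP ->; rewrite addn0.
rewrite ballS => /orP [/IH H|/existsP [z /andP [zb azy]]]; first lia.
have := IH _ _ zb; have := Hphi _ _ azy; lia.
Qed.

Lemma ball_path x p : forall z k, z \in ball adj k x -> path adj z p ->
  last z p \in ball adj (k + size p) x.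
Proof.
elim: p => [|y p IH] z k zb /=; first by rewrite addn0.
move=> /andP [azy py]; rewrite -addSnnS; apply: IH py.
exact: ball_step zb azy.
Qed.

Lemma ball_trans k m x y z : y \in ball adj k x -> z \in ball adj m y ->
  z \in ball adj (k + m) x.
Proof.
move=> yb; elim: m z => [|m IH] z.
  by rewrite ball0 addn0 => /eqP ->.
rewrite ballS addnS => /orP [/IH H|/existsP [w /andP [wb awz]]].
  exact: ball_sub1.
exact: ball_step (IH _ wb) awz.
Qed.

Lemma ball_sym k x y : y \in ball adj k x -> x \in ball adj k y.
Proof.
elim: k x y => [|k IH] x y.
  by rewrite !ball0 eq_sym.
rewrite ballS => /orP [/IH H|/existsP [z /andP [zb azy]]].
  exact: ball_sub1.
have h1 : z \in ball adj 1 y by apply: ball_step (_ : y \in ball adj 0 y) _; rewrite ?ball0 // adj_sym.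
by have := ball_trans h1 (IH _ _ zb); rewrite add1n.
Qed.

Lemma ball_conn x y : exists2 k, k < n & y \in ball adj k x.
Proof.
have /connectP [p pth ->] := conn x y.
case/shortenP: pth => p' pth' up' _.
exists (size p'); last first.
  by have := ball_path (_ : x \in ball adj 0 x) pth'; rewrite ?ball0 //; apply.
have := card_uniqP up'; rewrite /= => <-.
by have := max_card [predU1 x & p']; rewrite card_ord.
Qed.

Lemma dist_ball x y : y \in ball adj (dist adj x y) x.
Proof.
case: (ball_conn x y) => k kn yb.
have hh : has (fun k => y \in ball adj k x) (iota 0 n).
  by apply/hasP; exists k => //; rewrite mem_iota.
have := nth_find 0 hh; rewrite /dist.
by rewrite nth_iota ?add0n //; move: hh; rewrite has_find size_iota.
Qed.

Lemma dist_lt x y : dist adj x y < n.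
Proof.
case: (ball_conn x y) => k kn yb.
have hh : has (fun k => y \in ball adj k x) (iota 0 n).
  by apply/hasP; exists k => //; rewrite mem_iota.
by move: hh; rewrite has_find size_iota.
Qed.

Lemma dist_min k x y : y \in ball adj k x -> dist adj x y <= k.
Proof.
move=> yb; rewrite leqNgt; apply/negP => kd.
have := before_find 0 kd; rewrite nth_iota ?add0n ?yb //.
exact: ltn_trans kd (dist_lt x y).
Qed.

Lemma dist_sym x y : dist adj x y = dist adj y x.
Proof.
by apply/eqP; rewrite eqn_leq !dist_min // ball_sym // dist_ball.
Qed.

Lemma dist_tri x y z : dist adj x z <= dist adj x y + dist adj y z.
Proof. by apply: dist_min; apply: ball_trans (dist_ball _ _) (dist_ball _ _). Qed.

Lemma dist_xx x : dist adj x x = 0.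
Proof. by apply/eqP; rewrite -leqn0 dist_min // ball0. Qed.

Lemma dist_eq0 x y : dist adj x y = 0 -> x = y.
Proof. by move=> h; have := dist_ball x y; rewrite h ball0 => /eqP. Qed.

Lemma dist_lip (phi : 'I_n -> nat) :
  (forall z y, adj z y -> phi y <= phi z + 1) ->
  forall x y, phi y <= phi x + dist adj x y.
Proof. by move=> H x y; apply: ball_lip H _ _ _ (dist_ball x y). Qed.

Lemma dist_path x p : path adj x p -> dist adj x (last x p) <= size p.
Proof.
move=> pth; apply: dist_min.
by have := ball_path (_ : x \in ball adj 0 x) pth; rewrite ?ball0 //; apply.
Qed.

Lemma dist_adj x z y : adj z y -> dist adj x y <= dist adj x z + 1.
Proof. by move=> a; apply: dist_min; rewrite addn1; apply: ball_step (dist_ball _ _) a. Qed.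

Definition hh w := dist adj rt w.
Definition par w := odflt w [pick z | adj z w && (hh z == (hh w).-1)].

Lemma hh_rt : hh rt = 0.
Proof. exact: dist_xx. Qed.

Lemma hh0 w : hh w = 0 -> w = rt.
Proof. by move=> /(dist_eq0). Qed.

Lemma hh_adj z w : adj z w -> hh w <= hh z + 1.
Proof. exact: dist_adj. Qed.

Lemma lower_ex w : 0 < hh w -> exists z, adj z w && (hh z == (hh w).-1).
Proof.
move=> hp; have := dist_ball rt w; rewrite -/(hh w).
case E: (hh w) hp => [//|k] _.
rewrite ballS => /orP [/(dist_min)|/existsP [z /andP [zb azw]]].
  by rewrite -/(hh w) E ltnn.
exists z; rewrite azw /=; have := dist_min zb; rewrite -/(hh z).
have := hh_adj azw; rewrite E => h1 h2; apply/eqP; lia.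
Qed.

Lemma par_spec w : if 0 < hh w then adj (par w) w /\ hh (par w) = (hh w).-1
  else par w = w.
Proof.
rewrite /par; case: pickP => [z /andP [azw /eqP hz]|none] /=.
  case: ifP => // /negbT; rewrite -leqNgt leqn0 => /eqP hw.
  by move: hz; rewrite hw /= => /hh0 zr; move: azw; rewrite zr (hh0 hw) adj_irr.
case: ifP => // hw; by case: (lower_ex hw) => z; rewrite none.
Qed.

Lemma par_rt : par rt = rt.
Proof. by have := par_spec rt; rewrite hh_rt. Qed.

Lemma hh_par w : hh (par w) = (hh w).-1.
Proof.
have := par_spec w; case: ifP => [_ [] //|/negbT]; rewrite -leqNgt leqn0 => /eqP hw ->; by rewrite hw.
Qed.

Lemma nrt_hh w : (w != rt) = (0 < hh w).
Proof.
apply/idP/idP => [wr|hw]; first by rewrite lt0n; apply/eqP => /hh0 /eqP; rewrite (negbTE wr).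
by apply/eqP => wr; move: hw; rewrite wr hh_rt.
Qed.

Lemma par_adj w : w != rt -> adj (par w) w.
Proof. by rewrite nrt_hh => hw; have := par_spec w; rewrite hw => -[]. Qed.

Lemma hh_parS w : w != rt -> (hh (par w)).+1 = hh w.
Proof. by rewrite nrt_hh hh_par; case: (hh w). Qed.

Lemma chain_connect (e : rel 'I_n) : (forall z, z != rt -> e z (par z)) ->
  forall z, connect e z rt.
Proof.
move=> H z; elim: {z}(hh z) {-2}z (erefl (hh z)) => [|k IH] z hz.
  by rewrite (hh0 hz) connect0.
have zr : z != rt by rewrite nrt_hh hz.
apply: connect_trans (connect1 (H z zr)) (IH _ _).
by rewrite hh_par hz.
Qed.

Definition rm_edge (u v : 'I_n) : rel 'I_n :=
  [rel x y | adj x y && ~~ (((x == u) && (y == v)) || ((x == v) && (y == u)))].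

Lemma cycle_of u v : adj u v -> connect (rm_edge u v) u v -> has_cycle adj.
Proof.
move=> auv /connectP [p pth vl].
move: vl; case/shortenP: pth => p' pth' up' _ lp'.
exists u, p'; split => //.
- case: p' pth' up' lp' => [|y [|z p']] /=.
  + by move=> _ _ vu; move: auv; rewrite vu adj_irr.
  + move=> /andP [/andP [_ H] _] _ lp; by move: H; rewrite -lp !eqxx.
  + by [].
- by apply: sub_path pth' => x y /andP [].
- by rewrite -lp' adj_sym.
Qed.

Lemma adj_par u v : adj u v -> par u = v \/ par v = u.
Proof.
move=> auv; case: (eqVneq (par u) v) => [|puv]; first by left.
case: (eqVneq (par v) u) => [|pvu]; first by right.
exfalso; apply: acyc; apply: (cycle_of auv).
have H : forall z, z != rt -> rm_edge u v z (par z).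
  move=> z zr; rewrite /rm_edge /= adj_sym par_adj //=.
  apply/negP => /orP [/andP [/eqP zu /eqP pz]|/andP [/eqP zv /eqP pz]].
    by move: puv; rewrite -zu pz eqxx.
  by move: pvu; rewrite -zv pz eqxx.
have sym' : symmetric (rm_edge u v).
  move=> x y; rewrite /rm_edge /= adj_sym; by rewrite orbC (andbC (y == u)) (andbC (y == v)).
apply: connect_trans (chain_connect H u) _.
by rewrite (sym_connect_sym sym') chain_connect.
Qed.

Lemma adjE u v : adj u v =
  ((u != rt) && (par u == v)) || ((v != rt) && (par v == u)).
Proof.
apply/idP/idP => [auv|].
  case: (adj_par auv) => [pu|pv].
    have ur : u != rt by apply/eqP => ur; move: auv pu; rewrite ur par_rt => a e; move: a; by rewrite -e adj_irr.
    by rewrite ur pu eqxx.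
  have vr : v != rt by apply/eqP => vr; move: auv pv; rewrite vr par_rt => a e; move: a; by rewrite -e adj_irr.
  by rewrite vr pv eqxx orbT.
move=> /orP [/andP [ur /eqP <-]|/andP [vr /eqP <-]].
  by rewrite adj_sym par_adj.
exact: par_adj.
Qed.

Lemma par_neq w : w != rt -> par w != w.
Proof.
move=> wr; apply/eqP => pw; have := hh_parS wr; rewrite pw; lia.
Qed.

Definition ch u := [set c | (c != rt) && (par c == u)].

Lemma degE u : deg adj u = (u != rt) + #|ch u|.
Proof.
rewrite /deg; case: (boolP (u != rt)) => ur.
  have -> : [set v | adj u v] = par u |: ch u.
    apply/setP => v; rewrite !inE adjE ur /=; congr (_ || _).
    by rewrite eq_sym.
  rewrite cardsU1; congr (_ + _); apply/eqP; rewrite eqb1 inE negb_and negbK.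
  apply/orP; right; apply/eqP => ppu.
  have h1 := hh_parS ur; have pr : par u != rt by apply/eqP => pr; move: ppu; rewrite pr par_rt => pu; move: (par_neq ur); rewrite -pu par_rt eqxx.
  have := hh_parS pr; rewrite ppu; lia.
rewrite add0n; apply: eq_card => v; rewrite !inE adjE.
by rewrite (negbTE ur).
Qed.

Local Open Scope ring_scope.
Lemma sum_pick (R : ringType) (I : finType) (p : I) (b : pred I) (G : I -> R) :
  \sum_v (if (v == p) && b v then G v else 0) = if b p then G p else 0.
Proof.
rewrite (bigD1 p) //= eqxx /= big1 ?addr0 // => v /negbTE vp.
by rewrite vp.
Qed.

Lemma randicE (R : rcfType) :
  randic R adj = \sum_(w | w != rt) (Num.sqrt ((deg adj w * deg adj (par w))%:R))^-1.
Proof.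
set F := fun u v => (Num.sqrt ((deg adj u * deg adj v)%:R) : R)^-1.
have Fs : forall u v, F u v = F v u by move=> u v; rewrite /F mulnC.
rewrite /randic.
transitivity (\sum_u ((if (u != rt) && (u < par u)%N then F u (par u) else 0) +
   \sum_v (if (u == par v) && ((v != rt) && (u < v)%N) then F u v else 0))).
  apply: eq_bigr => u _; rewrite big_mkcond /=.
  rewrite -(sum_pick (par u) (fun v => (u != rt) && (u < v)%N) (F u)).
  rewrite -big_split /=; apply: eq_bigr => v _.
  rewrite adjE [v == par u]eq_sym [u == par v]eq_sym.
  have ex : ~~ [&& u != rt, par u == v, v != rt & par v == u].
    apply/negP => /and4P [ur /eqP pu vr /eqP pv].
    have := hh_parS ur; have := hh_parS vr; rewrite pu pv; lia.
  move: ex; case: (u != rt); case: (par u == v); case: (v != rt);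
    case: (par v == u); case: (u < v)%N; by rewrite /= ?addr0 ?add0r.
rewrite big_split /= exchange_big /=.
rewrite -big_split /= [RHS]big_mkcond /=; apply: eq_bigr => w _.
rewrite (eq_bigr (fun u => if (u == par w) && ((w != rt) && (u < w)%N) then F u w else 0)); last first.
  by move=> u _.
rewrite sum_pick.
case: (boolP (w != rt)) => //= wr; last by rewrite addr0.
have pw := par_neq wr.
case: (ltngtP w (par w)) => [lt|gt|e].
- by rewrite addr0.
- by rewrite add0r Fs.
- by move: pw; rewrite eq_sym; move/eqP: (val_inj e) => ->.
Qed.

Local Close Scope ring_scope.

Variable b : 'I_n.
Hypothesis Hmax : forall x y, dist adj x y <= dist adj rt b.

Definition D := hh b.
Definition vv i := iter (D - i) par b.
Definition anc u z := iter (hh z - hh u) par z == u.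

Lemma hh_iter k z : hh (iter k par z) = hh z - k.
Proof. elim: k => [|k IH]; first by rewrite subn0. by rewrite iterS hh_par IH; lia. Qed.

Lemma iter_rt k z : hh z <= k -> iter k par z = rt.
Proof. by move=> hz; apply: hh0; rewrite hh_iter; lia. Qed.

Lemma hh_le_D z : hh z <= D.
Proof. exact: Hmax. Qed.

Lemma hh_lt_n z : hh z < n.
Proof. exact: dist_lt. Qed.

Lemma hh_vv i : i <= D -> hh (vv i) = i.
Proof. by move=> iD; rewrite /vv hh_iter -/D; lia. Qed.

Lemma vv0 : vv 0 = rt.
Proof. by rewrite /vv subn0 iter_rt. Qed.

Lemma vvD : vv D = b.
Proof. by rewrite /vv subnn. Qed.

Lemma vv_nrt i : 0 < i <= D -> vv i != rt.
Proof. by move=> /andP [i0 iD]; rewrite nrt_hh hh_vv. Qed.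

Lemma par_vv i : 0 < i <= D -> par (vv i) = vv i.-1.
Proof.
move=> /andP [i0 iD]; rewrite /vv -iterS; have -> : (D - i.-1) = (D - i).+1 by lia. by [].
Qed.

Lemma ancE u z : anc u z -> hh u <= hh z /\ u = iter (hh z - hh u) par z.
Proof.
move=> /eqP e; split; last by [].
have := hh_iter (hh z - hh u) z; rewrite e; lia.
Qed.

Lemma anc_vv i : i <= D -> anc (vv i) b.
Proof. by move=> iD; rewrite /anc hh_vv // -/D. Qed.

Lemma anc_rt z : anc rt z.
Proof. by rewrite /anc hh_rt subn0 iter_rt. Qed.

Lemma anc_refl u : anc u u.
Proof. by rewrite /anc subnn. Qed.

Lemma anc_path w : anc w b -> w = vv (hh w).
Proof. by move=> /ancE [_ e]. Qed.

Lemma anc_par u z : z != rt -> anc u (par z) -> anc u z.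
Proof.
move=> zr a; have [hu e] := ancE a; rewrite /anc.
have := hh_parS zr => hz.
have -> : hh z - hh u = (hh (par z) - hh u).+1 by lia.
by rewrite iterSr -e.
Qed.

Lemma anc_up c z : c != rt -> anc c z -> anc (par c) z.
Proof.
move=> cr a; have [hc e] := ancE a; rewrite /anc.
have := hh_parS cr => hp.
have -> : hh z - hh (par c) = (hh z - hh c).+1 by lia.
by rewrite iterS -e.
Qed.

Lemma anc_step u x z : anc u x -> adj x z -> ~~ anc u z -> x = u /\ z = par u.
Proof.
move=> ax; rewrite adjE => /orP [/andP [xr /eqP pz]|/andP [zr /eqP pz]] nz.
  have [hu e] := ancE ax.
  have hx := hh_parS xr.
  case: (leqP (hh x) (hh u)) => hux.
    have e0 : hh x - hh u = 0 by lia.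
    have xu : x = u by move: e; rewrite e0.
    by split => //; rewrite -xu.
  exfalso; move/negP: nz; apply; rewrite /anc -pz.
  rewrite -iterSr; have -> : (hh (par x) - hh u).+1 = hh x - hh u by lia.
  by rewrite -e eqxx.
by exfalso; move/negP: nz; apply; apply: anc_par zr _; rewrite pz.
Qed.

Lemma lca_bound y j : j < D -> anc (vv j) y -> ~~ anc (vv j.+1) y -> hh y <= 2 * j.
Proof.
move=> jD ay ny.
pose phi z := if anc (vv j.+1) z then hh z + n else 2 * j + n - hh z.
have hj1 : hh (vv j) = j by rewrite hh_vv //; lia.
have hj2 : hh (vv j.+1) = j.+1 by rewrite hh_vv //.
have pv : par (vv j.+1) = vv j by rewrite par_vv.
have lip : forall x z, adj x z -> phi z <= phi x + 1.
  move=> x z axz; rewrite /phi.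
  have h1 := hh_adj axz; have h2 := hh_adj (_ : adj z x); rewrite adj_sym in h2.
  have := h2 axz => {}h2.
  have hxn := hh_lt_n x; have hzn := hh_lt_n z.
  case: (boolP (anc (vv j.+1) x)) => ax'; case: (boolP (anc (vv j.+1) z)) => az'.
  - lia.
  - have [xe ze] := anc_step ax' axz az'.
    rewrite ze pv xe hj1 hj2; lia.
  - rewrite adj_sym in axz.
    have [ze xe] := anc_step az' axz ax'.
    rewrite xe pv ze hj1 hj2; lia.
  - lia.
have := dist_lip lip y b; rewrite {1}/phi anc_vv // /phi (negbTE ny).
have := Hmax y b; rewrite -/(hh b) -/D => hd.
have := hh_lt_n y; lia.
Qed.

Lemma lca_ex y : exists j, [/\ j <= D, anc (vv j) y & (j < D -> ~~ anc (vv j.+1) y)].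
Proof.
suff H : forall m k, D - k = m -> k <= D -> anc (vv k) y ->
  exists j, [/\ j <= D, anc (vv j) y & (j < D -> ~~ anc (vv j.+1) y)].
  by apply: (H D 0); rewrite ?subn0 ?vv0 ?anc_rt.
elim=> [|m IH] k km kD ak.
  by exists k; split => // kD'; lia.
case: (boolP (anc (vv k.+1) y)) => ak'.
  by apply: (IH k.+1) => //; lia.
by exists k; split.
Qed.

Lemma dist_iter m z : dist adj (iter m par z) z <= m.
Proof.
elim: m => [|m IH]; first by rewrite dist_xx.
rewrite iterS; apply: leq_trans (dist_tri _ (iter m par z) _) _.
move: IH; case: (eqVneq (iter m par z) rt) => [->|wr] IH.
  rewrite par_rt dist_xx; lia.
have := par_adj wr => a.
have : dist adj (par (iter m par z)) (iter m par z) <= 1.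
  by apply: dist_min; apply: ball_step a; rewrite ball0.
lia.
Qed.

Lemma vv_iter j k : j <= k -> k <= D -> vv j = iter (k - j) par (vv k).
Proof. by move=> jk kD; rewrite /vv -iterD; have -> : D - j = k - j + (D - k) by lia. Qed.

Lemma ecc_center y : dist adj (vv (D./2)) y <= D - D./2.
Proof.
have [j [jD ay hj]] := lca_ex y.
have hyj : hh y <= 2 * j.
  case: (ltnP j D) => jD'; first by apply: lca_bound => //; apply: hj.
  have := hh_le_D y; lia.
have [hj' e] := ancE ay; rewrite hh_vv // in hj' e.
have d1 : dist adj (vv j) y <= hh y - j by rewrite e; apply: dist_iter.
have kD : D./2 <= D by rewrite -{2}(odd_double_half D); lia.
apply: leq_trans (dist_tri _ (vv j) _) _.
case: (leqP j (D./2)) => jk.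
  have : dist adj (vv (D./2)) (vv j) <= D./2 - j.
    by rewrite dist_sym // (vv_iter jk kD) dist_iter.
  have := odd_double_half D; lia.
have : dist adj (vv (D./2)) (vv j) <= j - D./2.
  by rewrite (vv_iter (ltnW jk) jD) dist_iter.
have := hh_le_D y; lia.
Qed.

Lemma bigmin_le_mem (I : eqType) (r : seq I) (F : I -> nat) m c :
  c \in r -> \big[minn/m]_(x <- r) F x <= F c.
Proof.
elim: r => [//|x r IH]; rewrite inE big_cons => /orP [/eqP ->|cr].
  exact: geq_minl.
exact: leq_trans (geq_minr _ _) (IH cr).
Qed.

Lemma radius_eq : radius adj = D - D./2.
Proof.
apply/eqP; rewrite eqn_leq; apply/andP; split.
  rewrite /radius; apply: leq_trans (bigmin_le_mem _ _ (mem_index_enum (vv D./2))) _.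
  by apply/bigmax_leqP => y _; apply: ecc_center.
rewrite /radius; elim/big_ind: _ => //.
- have := hh_lt_n b; rewrite -/D; lia.
- by move=> x y; rewrite leq_min => -> ->.
move=> x _; rewrite /ecc.
have h1 : dist adj x rt <= \max_(y < n) dist adj x y := leq_bigmax (F := fun y => dist adj x y) rt.
have h2 : dist adj x b <= \max_(y < n) dist adj x y := leq_bigmax (F := fun y => dist adj x y) b.
have := dist_tri rt x b; rewrite (dist_sym rt x) -/(hh b) -/D /=.
move: h1 h2; set M := \max_(y < n) _; set d1 := dist adj x rt; set d2 := dist adj x b.
have := half_facts D; lia.
Qed.


Definition oc u := #|[set c | ~~ anc c b & par c == u]|.

Lemma off_nrt c : ~~ anc c b -> c != rt.
Proof. by apply: contra => /eqP ->; apply: anc_rt. Qed.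

Lemma ch_off w : ~~ anc w b -> ch w = [set c | ~~ anc c b & par c == w].
Proof.
move=> nw; apply/setP => c; rewrite !inE.
case: (eqVneq (par c) w) => [pc|]; last by rewrite !andbF.
rewrite !andbT; apply/idP/idP => [cr|]; last exact: off_nrt.
apply/negP => ac; move/negP: nw; apply; rewrite -pc; exact: anc_up.
Qed.

Lemma ch_path i : i <= D -> ch (vv i) =
  [set c | ~~ anc c b & par c == vv i] :|: (if i < D then [set vv i.+1] else set0).
Proof.
move=> iD; apply/setP => c; rewrite !inE.
apply/idP/idP.
  move=> /andP [cr /eqP pc]; case: (boolP (anc c b)) => ac /=; last by rewrite pc eqxx.
  have hc := hh_parS cr; rewrite pc hh_vv // in hc.
  have cD := hh_le_D c.
  have ce := anc_path ac; rewrite -hc in ce.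
  have -> : i < D by rewrite -hc in cD.
  by rewrite inE ce eqxx.
move=> /orP [/andP [nc /eqP pc]|].
  by rewrite off_nrt // pc eqxx.
case: ifP => iD'; last by rewrite inE.
rewrite inE => /eqP ->; rewrite vv_nrt ?iD' //= par_vv //.
Qed.

Lemma deg_path i : i <= D -> deg adj (vv i) = (0 < i) + (i < D) + oc (vv i).
Proof.
move=> iD; rewrite degE ch_path // nrt_hh hh_vv // -addnA; congr (_ + _).
case: ifP => iD'; last by rewrite setU0 /oc.
rewrite setUC cardsU1 /oc inE anc_vv //.
Qed.

Hypothesis Dpos : 0 < D.

Lemma oc_rt : oc rt = 0.
Proof.
apply/eqP; rewrite cards_eq0; apply/eqP/setP => c; rewrite !inE.
apply/negbTE/negP => /andP [nc /eqP pc].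
have cr := off_nrt nc.
have hc := hh_parS cr; rewrite pc hh_rt in hc.
have := lca_bound Dpos (_ : anc (vv 0) c); rewrite vv0 anc_rt => /(_ isT).
suff -> : ~~ anc (vv 1) c by move=> /(_ isT); rewrite -hc.
apply/negP => a1; have [_ e] := ancE a1.
rewrite -hc hh_vv // subnn /= in e.
by move/negP: nc; apply; rewrite -e anc_vv.
Qed.

Lemma oc_b : oc b = 0.
Proof.
apply/eqP; rewrite cards_eq0; apply/eqP/setP => c; rewrite !inE.
apply/negbTE/negP => /andP [nc /eqP pc].
have := hh_parS (off_nrt nc); rewrite pc -/D.
have := hh_le_D c; lia.
Qed.

Lemma deg_rt : deg adj rt = 1.
Proof. by have := deg_path (leq0n D); rewrite vv0 oc_rt Dpos addn0. Qed.

Lemma deg_b : deg adj b = 1.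
Proof. by have := deg_path (leqnn D); rewrite vvD oc_b ltnn Dpos addn0. Qed.

Lemma deg_int i : 0 < i < D -> deg adj (vv i) = (oc (vv i)).+2.
Proof.
move=> /andP [i0 iD]; rewrite deg_path ?(ltnW iD) // i0 iD.
by rewrite add1n addSn add1n.
Qed.

Lemma off_child w : ~~ anc w b -> exists c, ~~ anc c b && anc (par c) b.
Proof.
elim: {w}(hh w) {-2}w (erefl (hh w)) => [|k IH] w hw nw.
  by move/negP: nw; rewrite (hh0 hw) anc_rt.
case: (boolP (anc (par w) b)) => ap; first by exists w; rewrite nw ap.
by apply: (IH (par w)) => //; rewrite hh_par hw.
Qed.

Local Open Scope ring_scope.
Variable R : rcfType.

Definition FF w : R := (Num.sqrt ((deg adj w * deg adj (par w))%:R))^-1.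
Definition qq u : R := (Num.sqrt (deg adj u)%:R)^-1.

Lemma split_randic : randic R adj =
  \sum_(w | anc w b) (if w != rt then FF w else 0) + \sum_(w | ~~ anc w b) FF w.
Proof.
rewrite randicE (bigID (fun w => anc w b)) /=; congr (_ + _).
  by rewrite -big_mkcondr; apply: eq_bigl => w; rewrite andbC.
by apply: eq_bigl => w; case: (boolP (anc w b)) => aw; rewrite ?andbF ?andbT // off_nrt.
Qed.

Lemma inv_ineq (A B : nat) : (1 <= A)%N -> (1 <= B)%N ->
  (Num.sqrt B%:R)^-1 - (A.-1)%:R * (Num.sqrt A%:R)^-1 <= (Num.sqrt ((A * B)%:R) : R)^-1.
Proof.
move=> A1 B1.
have a1 : 1 <= Num.sqrt (A%:R : R) by rewrite -{1}sqrtr1 ler_sqrt ?ler0n // ler1n.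
have c1 : 1 <= Num.sqrt (B%:R : R) by rewrite -{1}sqrtr1 ler_sqrt ?ler0n // ler1n.
rewrite natrM sqrtrM ?ler0n //.
set a := Num.sqrt (A%:R : R) in a1 *; set c := Num.sqrt (B%:R : R) in c1 *.
have aa : a * a = A%:R by rewrite -expr2 sqr_sqrtr ?ler0n.
have hA : (A.-1)%:R = a * a - 1 :> R by rewrite aa -[in RHS](prednK A1) -natr1 addrK.
rewrite hA invfM.
have a0 : a != 0 by apply/eqP => e; move: a1; rewrite e; lra.
have c0 : c != 0 by apply/eqP => e; move: c1; rewrite e; lra.
have x1 : a^-1 <= 1 by rewrite invf_le1 //; lra.
have y1 : c^-1 <= 1 by rewrite invf_le1 //; lra.
have ax : a * a^-1 = 1 by rewrite mulfV.
have x0 : 0 <= a^-1 by rewrite invr_ge0; lra.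
have y0 : 0 <= c^-1 by rewrite invr_ge0; lra.
set x := a^-1 in x1 ax x0 *; set y := c^-1 in y1 y0 *.
have -> : (a * a - 1) * x = a - x by rewrite mulrBl -mulrA ax mulr1 mul1r.
nra.
Qed.

Lemma deg_pos w : (1 <= deg adj w)%N.
Proof.
case: (eqVneq w rt) => [->|wr]; first by rewrite deg_rt.
by rewrite degE wr.
Qed.

Lemma deg_off w : ~~ anc w b -> deg adj w = (oc w).+1.
Proof. by move=> nw; rewrite degE off_nrt // ch_off. Qed.

Lemma off_bound : \sum_(u | anc u b) (oc u)%:R * qq u <= \sum_(w | ~~ anc w b) FF w.
Proof.
have step : \sum_(w | ~~ anc w b) (qq (par w) - (oc w)%:R * qq w) <= \sum_(w | ~~ anc w b) FF w.
  apply: ler_sum => w nw.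
  have := inv_ineq (deg_pos w) (deg_pos (par w)).
  by rewrite /FF /qq (deg_off nw).
apply: le_trans step; rewrite sumrB.
have -> : \sum_(w | ~~ anc w b) qq (par w) = \sum_u (oc u)%:R * qq u.
  rewrite (partition_big par xpredT) //=; apply: eq_bigr => u _.
  rewrite (eq_bigr (fun _ => qq u)); last by move=> w /andP [_ /eqP ->].
  rewrite (eq_bigl (fun w => w \in [set c | ~~ anc c b & par c == u])); last by move=> w; rewrite inE.
  by rewrite sumr_const mulr_natl.
by rewrite [\sum_(u < n) _](bigID (fun u => anc u b)) /= addrK.
Qed.

Lemma reindex (G : 'I_n -> R) : \sum_(w | anc w b) G w = \sum_(i < D.+1) G (vv (val i)).
Proof.
transitivity (\sum_w \sum_(i < D.+1) (if vv (val i) == w then G w else 0)).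
  rewrite big_mkcond; apply: eq_bigr => w _.
  case: (boolP (anc w b)) => aw.
    have hw : (hh w < D.+1)%N by rewrite ltnS hh_le_D.
    rewrite (bigD1 (Ordinal hw)) //= -(anc_path aw) eqxx big1 ?addr0 // => i ne.
    case: eqP => // e; exfalso; move/negP: ne; apply; apply/eqP/val_inj => /=.
    by rewrite -e hh_vv // -ltnS.
  rewrite big1 // => i _; case: eqP => // e; exfalso; move/negP: aw; apply.
  rewrite -e; apply: anc_vv; exact: (ltn_ord i).
rewrite exchange_big; apply: eq_bigr => i _.
rewrite (bigD1 (vv i)) //= eqxx big1 ?addr0 // => w /negbTE.
by rewrite eq_sym => ->.
Qed.

Definition ee i : R := if (0 < i)%N then (Num.sqrt ((deg adj (vv i) * deg adj (vv i.-1))%:R))^-1 else 0.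

Lemma on_sum : \sum_(w | anc w b) (if w != rt then FF w else 0) = \sum_(i < D.+1) ee i.
Proof.
rewrite reindex; apply: eq_bigr => i _.
have iD : (i <= D)%N by rewrite -ltnS.
rewrite /ee nrt_hh hh_vv //; case: ifP => // i0.
by rewrite /FF par_vv // i0.
Qed.

Lemma randic_lb : \sum_(i < D.+1) ee i + \sum_(i < D.+1) (oc (vv i))%:R * qq (vv i) <= randic R adj.
Proof.
by rewrite split_randic on_sum lerD2l -(reindex (fun u => (oc u)%:R * qq u)) off_bound.
Qed.

Lemma randic_exact : (forall w, anc w b) -> randic R adj = \sum_(i < D.+1) ee i.
Proof.
move=> all; rewrite split_randic on_sum.
have -> : \sum_(w | ~~ anc w b) FF w = 0 by rewrite big_pred0 // => w; rewrite all.
by rewrite addr0.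
Qed.

Local Close Scope ring_scope.

Lemma n_pos : (0 < n)%N.
Proof. exact: leq_ltn_trans (leq0n _) (ltn_ord rt). Qed.

Lemma D_path : is_path_graph adj -> D = n.-1.
Proof.
case=> f [finj fadj].
have n0 := n_pos.
have [x fx] := codomP (injF_onto finj (Ordinal n0)).
have n1 : n.-1 < n by rewrite prednK.
have [y fy] := codomP (injF_onto finj (Ordinal n1)).
pose phi z := nat_of_ord (f z).
have lip : forall z w, adj z w -> phi w <= phi z + 1.
  by move=> z w; rewrite fadj /phi => /orP [/eqP e|/eqP e]; lia.
have := dist_lip lip x y; rewrite /phi -fx -fy /=.
have := Hmax x y; have := hh_lt_n b; rewrite -/(hh b) -/D.
move: (dist adj x y) => d; lia.
Qed.

Lemma all_path_card : D = n.-1 -> forall w, anc w b.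
Proof.
move=> Dn w.
pose f : 'I_D.+1 -> 'I_n := fun i => vv i.
have finj : injective f.
  have hvv : forall i : 'I_D.+1, hh (vv i) = i by move=> i; apply: hh_vv; exact: (ltn_ord i).
  move=> i j /(congr1 hh); rewrite /f !hvv => e; exact: val_inj.
have cr : #|'I_n| <= #|'I_D.+1| by rewrite !card_ord Dn prednK // n_pos.
have /codomP [i ->] := inj_card_onto finj cr w.
by apply: anc_vv; rewrite -ltnS.
Qed.

Lemma path_of_all : (forall w, anc w b) -> is_path_graph adj /\ n = D.+1.
Proof.
move=> all.
have hinj : forall u w, hh u = hh w -> u = w.
  by move=> u w e; rewrite (anc_path (all u)) (anc_path (all w)) e.
have key : forall u v, ((u != rt) && (par u == v)) = (hh u == (hh v).+1).
  move=> u v; apply/idP/idP.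
    by move=> /andP [ur /eqP <-]; rewrite hh_parS.
  move=> /eqP e; have ur : u != rt by rewrite nrt_hh e.
  rewrite ur /=; apply/eqP/hinj; rewrite -(hh_parS ur) in e; lia.
split.
  exists (fun w => Ordinal (hh_lt_n w)); split.
    by move=> u w /(congr1 val) /= /hinj.
  by move=> u v /=; rewrite adjE !key.
apply/eqP; rewrite eqn_leq; apply/andP; split; last exact: hh_lt_n b.
have hD : forall w, hh w < D.+1 by move=> w; rewrite ltnS hh_le_D.
pose g : 'I_n -> 'I_D.+1 := fun w => Ordinal (hD w).
have ginj : injective g by move=> u w /(congr1 val) /= /hinj.
by have := leq_card g ginj; rewrite !card_ord.
Qed.

Lemma oc_zero : (forall w, anc w b) -> forall u, oc u = 0.
Proof.
move=> all u; apply/eqP; rewrite cards_eq0; apply/eqP/setP => c.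
by rewrite !inE all.
Qed.

Lemma exists_deg3 : ~~ [forall w, anc w b] -> exists i, 0 < i < D /\ 3 <= deg adj (vv i).
Proof.
move=> /forallPn [w nw].
have [c /andP [nc ap]] := off_child nw.
have ue := anc_path ap.
have oc1 : 0 < oc (par c).
  by rewrite card_gt0; apply/set0Pn; exists c; rewrite inE nc eqxx.
have hD := hh_le_D (par c).
case: (posnP (hh (par c))) => [h0|hp].
  by move: oc1; rewrite ue h0 vv0 oc_rt.
case: (eqVneq (hh (par c)) D) => [hDe|hDn].
  by move: oc1; rewrite ue hDe vvD oc_b.
have ii : 0 < hh (par c) < D by rewrite hp ltn_neqAle hDn hD.
exists (hh (par c)); split => //.
by rewrite deg_int // -ue.
Qed.

Local Open Scope ring_scope.

Lemma ee_sum1 : D = 1%N -> \sum_(i < D.+1) ee i = 1.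
Proof.
move=> D1.
rewrite D1 big_ord_recr big_ord1 /ee /= add0r.
have -> : vv 1 = b by rewrite -D1 vvD.
by rewrite vv0 deg_b deg_rt sqrtr1 invr1.
Qed.

Lemma main_sec :
  (is_path_graph adj /\ ~~ odd n /\ (2 < n)%N ->
     randic R adj - (radius adj)%:R = Num.sqrt 2 - 3 / 2) /\
  (~ (is_path_graph adj /\ ~~ odd n /\ (2 < n)%N) ->
     0 <= randic R adj - (radius adj)%:R) /\
  (n = 2%N -> randic R adj - (radius adj)%:R = 0).
Proof.
have [r1 [rr r32]] := sqrt2_facts R.
rewrite radius_eq.
pose a := fun i => deg adj (vv i).
have a0 : a 0%N = 1%N by rewrite /a vv0 deg_rt.
have aD : a D = 1%N by rewrite /a vvD deg_b.
have aint : forall i, (0 < i < D)%N -> (2 <= a i)%N by move=> i ii; rewrite /a deg_int.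
have ee_e : \sum_(i < D.+1) ee i = \sum_(i < D.+1) e_ R a i by [].
have hm := half_facts D.
have eD : D = (D./2 + D./2 + odd D)%N by have := odd_double_half D; rewrite -addnn; lia.
have er : (D - D./2 = D./2 + odd D)%N by lia.
have castD : D%:R = D./2%:R + D./2%:R + (odd D)%:R :> R by rewrite {1}eD !natrD.
rewrite er natrD.
have LB : (2 <= D)%N -> (D%:R - 2) / 2 + Num.sqrt 2 + \sum_(i < D.+1) X_ R D a i <= randic R adj.
  move=> D2; apply: le_trans (seq_main R D2 a0 aD aint) _.
  apply: le_trans _ randic_lb; rewrite ee_e lerD2l; apply: ler_sum => i _.
  rewrite /g_; case: ifP => ii.
    have e : (a i - 2)%N = oc (vv i) by rewrite /a deg_int // subSS subSS subn0.
    by rewrite e /qq.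
  by apply: mulr_ge0; rewrite ?ler0n ?invr_ge0 ?sqrtr_ge0.
have Xpos : forall i, 0 <= X_ R D a i.
  move=> i; rewrite /X_; case: ifP => ii //.
  by rewrite subr_ge0 ler_sqrt ?ler0n // ler_nat aint.
have exact_path : (2 <= D)%N -> (forall w, anc w b) -> randic R adj = (D%:R - 2) / 2 + Num.sqrt 2.
  move=> D2 all; rewrite randic_exact // ee_e seq_path //.
  by move=> i ii; rewrite /a deg_int // oc_zero.
split; last split.
- move=> [pg [ev n2]].
  have Dn := D_path pg.
  have all := all_path_card Dn.
  have D2 : (2 <= D)%N by rewrite Dn; case: n n2 {pg ev Dn all} => [|[|[|m]]].
  have oD : odd D by move: ev; rewrite Dn; case: n n2 {pg Dn all D2} => [|m] //= _; rewrite negbK.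
  rewrite exact_path // castD oD /=; lra.
- move=> npath.
  case: (ltngtP D 1) => [D0|D2|D1].
  + by move: Dpos; rewrite ltnNge -ltnS D0.
  + have XL := LB D2.
    have Xs : 0 <= \sum_(i < D.+1) X_ R D a i by apply: sumr_ge0 => i _.
    case oD: (odd D); last first.
      rewrite castD oD /= in XL *; lra.
    case: (boolP [forall w, anc w b]) => [/forallP all|nall].
      exfalso; apply: npath; have [pg nD] := path_of_all all.
      split => //; rewrite nD /= oD /=; split => //.
    have [i [ii i3]] := exists_deg3 nall.
    have iD : (i < D.+1)%N by rewrite ltnS; case/andP: ii => _ /ltnW.
    have Xi : 3 / 2 - Num.sqrt 2 <= X_ R D a i.
      rewrite /X_ ii lerD2r.
      have s0 := sqrtr_ge0 ((a i)%:R : R).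
      have ss : Num.sqrt ((a i)%:R : R) * Num.sqrt ((a i)%:R) = (a i)%:R by rewrite -expr2 sqr_sqrtr ?ler0n.
      have a3 : 3 <= ((a i)%:R : R) by rewrite ler_nat; exact: i3.
      nra.
    have Xs' : X_ R D a i <= \sum_(j < D.+1) X_ R D a j.
      rewrite (bigD1 (Ordinal iD)) //= lerDl; apply: sumr_ge0 => j _; exact: Xpos.
    rewrite castD oD /= in XL *; lra.
  + have all := ee_sum1 D1.
    have := randic_lb; rewrite all => H.
    have : 0 <= \sum_(i < D.+1) (oc (vv i))%:R * qq (vv i).
      by apply: sumr_ge0 => i _; apply: mulr_ge0; rewrite ?ler0n ?invr_ge0 ?sqrtr_ge0.
    have -> : D./2 = 0%N by rewrite D1.
    have -> : odd D = true by rewrite D1.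
    move: H; rewrite /=; lra.
- move=> n2.
  have D1 : D = 1%N by have := hh_lt_n b; rewrite -/D n2; move: Dpos; lia.
  have all := all_path_card (etrans D1 (esym (congr1 predn n2))).
  rewrite randic_exact // ee_sum1 // D1 /=; lra.
Qed.

End Rooted.

Local Open Scope ring_scope.

Theorem theorem5p1 (R : realType) (n : nat) (adj : rel 'I_n) :
  (2 <= n)%N -> simple_graph adj -> is_tree adj ->
  (is_path_graph adj /\ ~~ odd n /\ (2 < n)%N ->
     randic R adj - (radius adj)%:R = Num.sqrt 2 - 3 / 2) /\
  (~ (is_path_graph adj /\ ~~ odd n /\ (2 < n)%N) ->
     0 <= randic R adj - (radius adj)%:R) /\
  (n = 2%N -> randic R adj - (radius adj)%:R = 0).
Proof.
move=> n2 [asym airr] [aconn aacyc].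
have n0 : (0 < n)%N by apply: leq_trans n2.
pose x0 : 'I_n := Ordinal n0.
have [[a b] _ Hab] := @arg_maxnP _ (x0, x0) xpredT (fun p : 'I_n * 'I_n => dist adj p.1 p.2) isT.
have Hmax : forall x y, (dist adj x y <= dist adj a b)%N.
  by move=> x y; exact: (Hab (x, y) isT).
have Dpos : (0 < D adj a b)%N.
  pose x1 : 'I_n := Ordinal n2.
  have := Hmax x0 x1; rewrite /D /hh.
  case: (posnP (dist adj x0 x1)) => [e|p]; last by move=> h; apply: leq_trans p h.
  by have := dist_eq0 aconn e.
exact: (main_sec asym airr aconn aacyc Hmax Dpos R).
Qed.
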